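(* Let $C$ be an $(n,k)$-code with generator matrix $G$ and let $\ell\ge2$. (a) $C$ is $\operatorname{rMDS}^0(\ell)$ if and only if $C$ is $\operatorname{MDS}(\ell)$. (b) If $C$ is $\operatorname{rMDS}^d(\ell)$, then $C$ is $\operatorname{rMDS}^{d'}(\ell)$ for all $d'\ge d+1$ (with $d'\le n-k$). (c) If $C$ is $\operatorname{rMDS}^d(\ell)$, then $C$ is $\operatorname{rMDS}^d(\ell')$ for all $\ell'\in\{2,\dots,\ell-1\}$. (d) $C$ is $\operatorname{rMDS}^d(2)$ if and only if every $k+d$ columns of $G$ span $\mathbb F^k$.
   Context: For a matrix $V$ and $A\subseteq[n]$, $V|_A$ denotes the columns in $A$ and $V_A$ their span. A generic matrix has independent indeterminate entries. A code with $k\times n$ generator matrix $V$ is $\operatorname{MDS}(\ell)$ if for all $A_1,\dots,A_\ell\subseteq[n]$, $\dim(V_{A_1}\cap\dots\cap V_{A_\ell})=\dim(W_{A_1}\cap\dots\cap W_{A_\ell})$ for generic $k\times n$ $W$. $\mathcal G_{A_1,\dots,A_\ell}[V]$ is the $\ell k\times(k+\sum|A_i|)$ block matrix whose $i$-th block row has $I_k$ in the first block column and $V|_{A_i}$ in block column $i+1$. Sets are $V$-saturated if $\operatorname{rank}\mathcal G_{A_1,\dots,A_\ell}[V]=\ell k$, and have the $m$-dimensional saturation property if they are $W$-saturated for generic $m\times n$ $W$. $C$ is $\operatorname{rMDS}^d(\ell)$ ($0\le d\le n-k$) if every family with the $(k+d)$-dimensional saturation property is $G$-saturated. *)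

(* Defs.v *)
From HB Require Import structures.
From mathcomp Require Import all_boot all_order all_algebra.
From mathcomp Require Import fraction.
From mathcomp Require Import mpoly.
Set Implicit Arguments. Unset Strict Implicit. Unset Printing Implicit Defensive.
Import GRing.Theory.
Local Open Scope ring_scope.

Definition colsubset (K : fieldType) (m n : nat) (V : 'M[K]_(m, n))
  (A : {set 'I_n}) : 'M[K]_(m, #|A|) :=
  colsub (fun j : 'I_#|A| => enum_val j) V.

(* V_A : the column span of V|_A, represented (mxalgebra convention: row spaces)
   by the row space of (V|_A)^T, as a square matrix. *)
Definition colspan (K : fieldType) (m n : nat) (V : 'M[K]_(m, n))
  (A : {set 'I_n}) : 'M[K]_m := <<(colsubset V A)^T>>%MS.

Definition dim_cap (K : fieldType) (m n l : nat) (V : 'M[K]_(m, n))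
  (A : 'I_l -> {set 'I_n}) : nat :=
  \rank (\bigcap_(i < l) colspan V (A i))%MS.

(* The generic m x n matrix: entries are independent indeterminates X_(i,j),
   living in the field of rational functions F(X_(i,j)). *)
Definition genfield (F : fieldType) (m n : nat) : fieldType :=
  {fraction {mpoly F[m * n]}}.

Definition genmx (F : fieldType) (m n : nat) : 'M[genfield F m n]_(m, n) :=
  \matrix_(i < m, j < n) (@FracField.tofrac _ ('X_(mxvec_index i j) : {mpoly F[m * n]})).

(* The block matrix G_{A_1,...,A_l}[V] of size (l m) x (m + sum_i |A_i|):
   block row i is  [ I_m | 0 ... 0 | V|_{A_i} | 0 ... 0 ]  (V|_{A_i} in block column i+1). *)
Definition Gmx (K : fieldType) (m n l : nat) (V : 'M[K]_(m, n))
  (A : 'I_l -> {set 'I_n}) : 'M[K]_(\sum_(i < l) m, m + \sum_(j < l) #|A j|) :=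
  row_mx (\mxcol_(i < l) (1%:M : 'M[K]_m))
         (\mxblock_(i < l, j < l)
            (if i == j then colsubset V (A j) else 0 : 'M[K]_(m, #|A j|))).

Definition saturated (K : fieldType) (m n l : nat) (V : 'M[K]_(m, n))
  (A : 'I_l -> {set 'I_n}) : bool :=
  \rank (Gmx V A) == (l * m)%N.

Definition sat_prop (F : fieldType) (m n l : nat) (A : 'I_l -> {set 'I_n}) : bool :=
  saturated (genmx F m n) A.

Definition MDS (F : fieldType) (k n : nat) (l : nat) (G : 'M[F]_(k, n)) : Prop :=
  forall A : 'I_l -> {set 'I_n}, dim_cap G A = dim_cap (genmx F k n) A.

Definition rMDS (F : fieldType) (k n : nat) (d l : nat) (G : 'M[F]_(k, n)) : Prop :=
  forall A : 'I_l -> {set 'I_n}, sat_prop F (k + d) A -> saturated G A.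

(* Main.v *)
Require Import Defs.
From HB Require Import structures.
From mathcomp Require Import all_boot all_order all_algebra.
From mathcomp Require Import fraction mpoly zify.
Set Implicit Arguments. Unset Strict Implicit. Unset Printing Implicit Defensive.
Import GRing.Theory.

Module Helpers.
Local Open Scope ring_scope.


Section NK.
Variables (K : fieldType) (m n : nat) (V : 'M[K]_(m, n)).

Definition Nk (S : {set 'I_n}) : 'M[K]_m := kermx (colsubset V S).

Lemma NkP (w : 'rV[K]_m) S :
  (w <= Nk S)%MS = [forall j, (j \in S) ==> ((w *m V) 0 j == 0)].
Proof.
apply/sub_kermxP/forallP => [H j|H].
  apply/implyP => jS; have /matrixP /(_ 0 (enum_rank_in jS j)) := H.
  move=> H1; rewrite !mxE in H1; apply/eqP; rewrite !mxE -[RHS]H1; apply: eq_bigr => i _.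
  by rewrite /colsubset !mxE enum_rankK_in.
apply/matrixP => i c; rewrite ord1 !mxE.
have /implyP /(_ (enum_valP c)) /eqP := H (enum_val c).
rewrite !mxE => H1; rewrite -[RHS]H1; by apply: eq_bigr => k _; rewrite /colsubset !mxE.
Qed.

Lemma rank_Nk S : \rank (Nk S) = (m - \rank (colsubset V S))%N.
Proof. exact: mxrank_ker. Qed.

Lemma Nk_anti (S T : {set _}) : S \subset T -> (Nk T <= Nk S)%MS.
Proof.
move=> /subsetP sST; apply/row_subP => i; rewrite NkP; apply/forallP => j.
apply/implyP => jS; have := row_sub i (Nk T); rewrite NkP => /forallP /(_ j).
by rewrite sST.
Qed.

Lemma NkU (w : 'rV[K]_m) S T :
  (w <= Nk (S :|: T))%MS = (w <= Nk S)%MS && (w <= Nk T)%MS.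
Proof.
rewrite !NkP; apply/forallP/andP => [H|[/forallP H1 /forallP H2] j].
  by split; apply/forallP => j; apply/implyP => jS;
     have /implyP := H j; apply; rewrite inE jS ?orbT.
by rewrite inE; apply/implyP => /orP [/(implyP (H1 j))|/(implyP (H2 j))].
Qed.

End NK.


Lemma row_freeP' (K : fieldType) p q (M : 'M[K]_(p, q)) :
  row_free M <-> (forall u : 'rV_p, u *m M = 0 -> u = 0).
Proof.
split => [H u uM|H].
  by apply: (row_free_inj H); rewrite uM mul0mx.
rewrite -kermx_eq0; apply/negPn/negP => nz.
have := nz_row_sub (kermx M); move/sub_kermxP/H/eqP.
by rewrite nz_row_eq0 (negPf nz).
Qed.

Lemma sum_const_ord l m : (\sum_(i < l) m)%N = (l * m)%N.
Proof. by rewrite big_const_ord iter_addn_0 mulnC. Qed.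

Section Sat.
Variables (K : fieldType) (m n l : nat) (V : 'M[K]_(m, n)) (A : 'I_l -> {set 'I_n}).

Definition indep := forall w : 'I_l -> 'rV[K]_m,
  (forall i, (w i <= Nk V (A i))%MS) -> \sum_i w i = 0 -> forall i, w i = 0.

Lemma Gmx_mul (w : 'I_l -> 'rV[K]_m) :
  (@mxrow _ l (fun _ => m) 1 w) *m Gmx V A =
  row_mx (\sum_i w i) (\mxrow_j (w j *m colsubset V (A j))).
Proof.
rewrite /Gmx mul_mx_row mul_mxrow_mxcol mul_mxrow_mxblock.
congr row_mx; first by apply: eq_bigr => i _; rewrite mulmx1.
apply: eq_mxrow => j; rewrite (bigD1 j) //= eqxx big1 ?addr0 // => i /negPf ->.
by rewrite mulmx0.
Qed.

Lemma sat_indep : saturated V A <-> indep.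
Proof.
rewrite /saturated -sum_const_ord; change (row_free (Gmx V A) <-> indep).
rewrite row_freeP'; split => [H w wN w0 i|H u uG].
  have r0 : \mxrow_j (w j *m colsubset V (A j)) = 0.
    by rewrite -(mxrow0 (q_ := fun j => #|A j|)); apply: eq_mxrow => j; apply/sub_kermxP.
  have u0 : @mxrow _ l (fun _ => m) 1 w = 0.
    by apply: H; rewrite Gmx_mul w0 r0 row_mx0.
  by rewrite -(@mxrowK _ _ (fun _ => m) 1 w i) u0 submxrow0.
pose w i := @submxrow _ l (fun _ => m) 1 u i.
have uw : u = @mxrow _ l (fun _ => m) 1 w by rewrite submxrowK.
move: uG; rewrite uw Gmx_mul => /eqP; rewrite row_mx_eq0 => /andP [/eqP s0 /eqP r0].
have wN : forall j, (w j <= Nk V (A j))%MS.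
  move=> j; apply/sub_kermxP.
  by have /eq_mxrowP /(_ j) := etrans r0 (esym (mxrow0 (q_ := fun j => #|A j|) _)).
have := H w wN s0; move=> w0.
by rewrite (eq_mxrow (B_ := fun _ => 0) w0) mxrow0.
Qed.

End Sat.


Section Direct.
Variables (K : fieldType) (m n l : nat) (V : 'M[K]_(m, n)) (A : 'I_l -> {set 'I_n}).

Lemma indep_direct : indep V A <-> mxdirect (\sum_i Nk V (A i)).
Proof.
split => [H|/mxdirect_sumsP H w wN w0 i].
  apply/mxdirect_sumsP => i _; apply/eqP; rewrite -submx0; apply/row_subP => k.
  rewrite submx0; set r := row k _.
  have : (r <= \sum_(j | j != i) Nk V (A j))%MS.
    by rewrite (submx_trans (row_sub k _)) // capmxSr.
  move=> /sub_sumsmxP [u ru].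
  pose w j := if j == i then - r else u j *m Nk V (A j).
  have wN : forall j, (w j <= Nk V (A j))%MS.
    move=> j; rewrite /w; case: eqP => [->|_]; last exact: submxMl.
    by rewrite eqmx_opp (submx_trans (row_sub k _)) // capmxSl.
  have w0 : \sum_j w j = 0.
    rewrite (bigD1 i) //= /w eqxx ru addrC; apply/eqP; rewrite subr_eq0; apply/eqP.
    by apply: eq_bigr => j /negPf ->.
  have := H w wN w0 i; rewrite /w eqxx => /eqP; by rewrite oppr_eq0.
have : (w i <= Nk V (A i) :&: \sum_(j | true && (j != i)) Nk V (A j))%MS.
  rewrite sub_capmx wN /=.
  have -> : w i = - \sum_(j | j != i) w j.
    by apply/eqP; rewrite -addr_eq0; move: w0; rewrite (bigD1 i) //= => ->.
  rewrite eqmx_opp; apply: summx_sub_sums => j _; exact: wN.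
by rewrite H // submx0 => /eqP.
Qed.

Lemma indep_rank : indep V A <-> \rank (\sum_i Nk V (A i))%MS = (\sum_i \rank (Nk V (A i)))%N.
Proof. by rewrite indep_direct mxdirectE /=; split => /eqP. Qed.

End Direct.


Section Orth.
Variables (K : fieldType) (m : nat).

Definition orth p (X : 'M[K]_(p, m)) : 'M[K]_m := kermx X^T.

Lemma orth_anti p q (X : 'M[K]_(p, m)) (Y : 'M[K]_(q, m)) :
  (X <= Y)%MS -> (orth Y <= orth X)%MS.
Proof.
move=> /mulmxKpV XY; apply/sub_kermxP; rewrite -XY trmx_mul mulmxA.
by rewrite /orth mulmx_ker mul0mx.
Qed.

Lemma rank_orth p (X : 'M[K]_(p, m)) : \rank (orth X) = (m - \rank X)%N.
Proof. by rewrite /orth mxrank_ker mxrank_tr. Qed.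

Lemma orth_eq p q (X : 'M[K]_(p, m)) (Y : 'M[K]_(q, m)) :
  (X == Y)%MS -> (orth X == orth Y)%MS.
Proof. by move=> /andP [XY YX]; rewrite /eqmx !orth_anti. Qed.

Lemma orth_adds (X Y : 'M[K]_m) : (orth X :&: orth Y <= orth (X + Y)%MS)%MS.
Proof.
have h : (orth (col_mx X Y) <= orth (X + Y)%MS)%MS.
  by apply: orth_anti; rewrite addsmxE submx_refl.
apply: submx_trans h.
apply/sub_kermxP; rewrite tr_col_mx mul_mx_row.
have /sub_kermxP -> : (orth X :&: orth Y <= orth X)%MS by apply: capmxSl.
have /sub_kermxP -> : (orth X :&: orth Y <= orth Y)%MS by apply: capmxSr.
by rewrite row_mx0.
Qed.

Lemma orth_cap (X Y : 'M[K]_m) : (orth X + orth Y == orth (X :&: Y))%MS.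
Proof.
have sub : (orth X + orth Y <= orth (X :&: Y))%MS.
  by rewrite addsmx_sub !orth_anti ?capmxSl ?capmxSr.
rewrite -(mxrank_leqif_eq sub).
have h1 := mxrank_sum_cap (orth X) (orth Y).
have h2 := mxrank_sum_cap X Y.
have h3 := mxrankS (orth_adds X Y).
rewrite !rank_orth in h1 h3 *.
have := rank_leq_row X; have := rank_leq_row Y; have := rank_leq_row (X + Y)%MS.
have := rank_leq_row (X :&: Y)%MS.
move=> *; apply/eqP; have := mxrankS sub; rewrite rank_orth; lia.
Qed.

Lemma orth1 : orth (1%:M : 'M[K]_m) = 0.
Proof. by apply/eqP; rewrite -mxrank_eq0 rank_orth mxrank1 subnn. Qed.

Lemma orth_bigcap l (X : 'I_l -> 'M[K]_m) :
  (\sum_(i < l) orth (X i) == orth (\bigcap_(i < l) X i)%MS)%MS.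
Proof.
elim: l X => [|l IH] X; first by rewrite !big_ord0 orth1 submx_refl.
rewrite !big_ord_recr /=; apply/eqmxP.
apply: (@eqmx_trans _ _ _ _ _ _ (orth (\bigcap_(i < l) X (widen_ord (leqnSn l) i))%MS + orth (X ord_max))%MS).
  by apply: adds_eqmx => //; apply/eqmxP; exact: IH.
by apply/eqmxP; apply: orth_cap.
Qed.

End Orth.

Section Dual.
Variables (K : fieldType) (m n l : nat) (V : 'M[K]_(m, n)) (A : 'I_l -> {set 'I_n}).

Lemma Nk_orth S : (Nk V S == orth (colspan V S))%MS.
Proof.
have -> : Nk V S = orth (colsubset V S)^T by rewrite /Nk /orth trmxK.
by apply: orth_eq; apply/eqmxP; rewrite /colspan; apply: eqmx_sym; apply: genmxE.
Qed.

Lemma dual : (dim_cap V A + \rank (\sum_i Nk V (A i)))%N = m.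
Proof.
change ((dim_cap V A + \rank (\sum_(i < l) Nk V (A i)))%N = m).
have e1 : (\sum_(i < l) Nk V (A i) :=: \sum_(i < l) orth (colspan V (A i)))%MS.
  by apply: eqmx_sums => i _; apply/eqmxP; exact: Nk_orth.
rewrite e1; have /eqmxP -> := orth_bigcap (fun i => colspan V (A i)).
rewrite rank_orth /dim_cap; have := rank_leq_row (\bigcap_(i < l) colspan V (A i))%MS.
lia.
Qed.

End Dual.


Lemma mxrank_mxsub (K : fieldType) p q p' q' (g : 'I_p' -> 'I_p) (h : 'I_q' -> 'I_q)
   (M : 'M[K]_(p, q)) : (\rank (mxsub g h M) <= \rank M)%N.
Proof.
have -> : mxsub g h M = rowsub g (colsub h M) by apply/matrixP => i j; rewrite !mxE.
apply: leq_trans (mxrankS (rowsub_sub _ _)) _.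
have -> : colsub h M = (rowsub h M^T)^T by apply/matrixP => i j; rewrite !mxE.
by rewrite mxrank_tr (leq_trans (mxrankS (rowsub_sub _ _))) // mxrank_tr.
Qed.

Section Spec.
Variables (R : idomainType) (L : fieldType) (f : {rmorphism R -> L}).

Lemma spec_rank p q (P : 'M[R]_(p, q)) :
  (\rank (map_mx f P) <= \rank (map_mx (@FracField.tofrac R) P))%N.
Proof.
set M := map_mx f P; set f1 := maxrankfun M.
have hY : row_free (rowsub f1 M) := maxrowsub_free M.
have hX : row_full (rowsub f1 M)^T.
  by rewrite /row_full mxrank_tr; exact: hY.
set f2 := fullrankfun hX.
have hZ := fullrowsub_unit hX.
have eZ : rowsub f2 (rowsub f1 M)^T = (map_mx f (mxsub f1 f2 P))^T.
  by apply/matrixP => i j; rewrite !mxE.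
rewrite eZ unitmxE det_tr det_map_mx unitfE in hZ.
have dQ : \det (mxsub f1 f2 P) != 0.
  by apply: contraNneq hZ => ->; rewrite rmorph0.
have uQ : map_mx (@FracField.tofrac R) (mxsub f1 f2 P) \in unitmx.
  by rewrite unitmxE det_map_mx unitfE tofrac_eq0.
have := mxrank_unit uQ; rewrite map_mxsub => <-.
exact: mxrank_mxsub.
Qed.

End Spec.


Definition GmxR (R : pzRingType) m n l (V : 'M[R]_(m, n)) (A : 'I_l -> {set 'I_n}) :
   'M[R]_(\sum_(i < l) m, m + \sum_(j < l) #|A j|) :=
  row_mx (\mxcol_(i < l) (1%:M : 'M[R]_m))
         (\mxblock_(i < l, j < l)
            (if i == j then colsub (fun c : 'I_#|A j| => enum_val c) V else 0 : 'M[R]_(m, #|A j|))).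

Lemma Gmx_map (R : pzRingType) (K : fieldType) (f : {rmorphism R -> K}) m n l
  (P : 'M[R]_(m, n)) (A : 'I_l -> {set 'I_n}) :
  Gmx (map_mx f P) A = map_mx f (GmxR P A).
Proof.
rewrite /Gmx /GmxR map_row_mx; congr row_mx; apply/matrixP => i j; rewrite !mxE.
  by rewrite rmorphMn rmorph1.
by case: (_ == _); rewrite !mxE ?rmorph0.
Qed.

Lemma colsubset_map (R : pzRingType) (K : fieldType) (f : {rmorphism R -> K}) m n
  (P : 'M[R]_(m, n)) (S : {set 'I_n}) :
  colsubset (map_mx f P) S = map_mx f (colsub (fun c : 'I_#|S| => enum_val c) P).
Proof. by apply/matrixP => i j; rewrite !mxE. Qed.

Section Gen.
Variables (F : fieldType) (m n : nat).

Definition Pgen : 'M_(m, n) :=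
  \matrix_(i < m, j < n) ('X_(mxvec_index i j) : {mpoly F[m * n]}).

Lemma genmxE' : Defs.genmx F m n = map_mx (@FracField.tofrac _) Pgen.
Proof. by apply/matrixP => i j; rewrite !mxE. Qed.

Lemma evalE (G0 : 'M[F]_(m, n)) :
  G0 = map_mx (meval (fun t => mxvec G0 0 t)) Pgen.
Proof. by apply/matrixP => i j; rewrite !mxE mevalXU mxvecE. Qed.

Lemma spec_Gmx l (G0 : 'M[F]_(m, n)) (A : 'I_l -> {set 'I_n}) :
  (\rank (Gmx G0 A) <= \rank (Gmx (Defs.genmx F m n) A))%N.
Proof. by rewrite {1}(evalE G0) genmxE' !Gmx_map; apply: spec_rank. Qed.

Lemma spec_col (G0 : 'M[F]_(m, n)) (S : {set 'I_n}) :
  (\rank (colsubset G0 S) <= \rank (colsubset (Defs.genmx F m n) S))%N.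
Proof. by rewrite {1}(evalE G0) genmxE' !colsubset_map; apply: spec_rank. Qed.

Lemma gen_rank (S : {set 'I_n}) :
  \rank (colsubset (Defs.genmx F m n) S) = minn m #|S|.
Proof.
apply/eqP; rewrite eqn_leq leq_min rank_leq_row rank_leq_col /=.
pose G0 : 'M[F]_(m, n) :=
  \matrix_(i, j) ((j \in S) && (index j (enum S) == i))%:R.
apply: leq_trans (spec_col G0 S).
have -> : colsubset G0 S = pid_mx (minn m #|S|).
  apply/matrixP => i c; rewrite !mxE enum_valP /=.
  have -> : index (enum_val c) (enum S) = c.
    rewrite (enum_val_nth (enum_val c)) index_uniq ?enum_uniq //.
    by rewrite -cardE.
  have ci := ltn_ord c; have ii := ltn_ord i.
  case: (c =P i :> nat) => [e|ne]; last by case: eqP => // e; case: ne.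
  by rewrite e eqxx leq_min ii /= -e ci.
by rewrite rank_pid_mx // ?geq_minl ?geq_minr.
Qed.

End Gen.


Section Enlarge.
Variables (K : fieldType) (m n l : nat) (V : 'M[K]_(m, n)).
Hypothesis hV : forall w : 'rV[K]_m, (w <= Nk V setT)%MS -> w = 0.

Lemma enlarge (A : 'I_l -> {set 'I_n}) :
  exists B : 'I_l -> {set 'I_n}, (forall i, A i \subset B i) /\ indep V B /\
    \rank (\sum_i Nk V (B i))%MS = \rank (\sum_i Nk V (A i))%MS.
Proof.
have [N] := ubnP (\sum_i #|~: A i|)%N; elim: N A => // N IH A hN.
have [dA|ndA] := boolP (mxdirect (\sum_i Nk V (A i))).
  by exists A; split => //; split => //; apply/indep_direct.
pose X i := (Nk V (A i) :&: \sum_(j | true && (j != i)) Nk V (A j))%MS.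
case: (pickP (fun i => X i != 0)) => [i Xi | none]; last first.
  case/negP: ndA; apply/mxdirect_sumsP => i _.
  by have := none i; rewrite /X => /negbFE/eqP.
set u := nz_row (X i).
have u0 : u != 0 by rewrite nz_row_eq0.
have uX : (u <= X i)%MS := nz_row_sub _.
have uA : (u <= Nk V (A i))%MS by apply: submx_trans uX _; apply: capmxSl.
have uS : (u <= \sum_(j | true && (j != i)) Nk V (A j))%MS.
  by apply: submx_trans uX _; apply: capmxSr.
have : ~~ (u <= Nk V setT)%MS by apply/negP => /hV /eqP; rewrite (negPf u0).
rewrite NkP negb_forall => /existsP [x]; rewrite in_setT /= => hx.
have xA : x \notin A i.
  apply/negP => xA; move: uA; rewrite NkP => /forallP /(_ x).
  by rewrite xA (negPf hx).
pose B j := if j == i then x |: A i else A j.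
have AB : forall j, A j \subset B j.
  by move=> j; rewrite /B; case: eqP => [->|_]; rewrite ?subsetUr.
have hB : (\sum_i #|~: B i| < \sum_i #|~: A i|)%N.
  rewrite (bigD1 i) //= [X in (_ < X)%N](bigD1 i) //= /B eqxx.
  rewrite -addSn leq_add //; last first.
    by rewrite leq_eqVlt; apply/orP; left; apply/eqP/eq_bigr => j /negPf ->.
  apply: proper_card; rewrite properC; apply: properUr; by rewrite sub1set.
have [C [BC [iC rC]]] := IH B (leq_trans hB (ltnSE hN)).
exists C; split; first by move=> j; apply: subset_trans (AB j) (BC j).
split => //; rewrite rC; apply/eqmx_rank/andP; split.
  by apply: sumsmxS => j _; apply: Nk_anti.
apply/sumsmx_subP => j _.
case: (eqVneq j i) => [->{j}|ji]; last first.
  by apply: (sumsmx_sup j) => //; rewrite /B (negPf ji) submx_refl.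
apply/row_subP => k; set w := row k _.
have wA : (w <= Nk V (A i))%MS := row_sub k _.
set c := (w *m V) 0 x / (u *m V) 0 x.
have -> : w = (w - c *: u) + c *: u by rewrite subrK.
have E : forall (a b : 'rV[K]_n) (d : K) y, (a - d *: b) 0 y = a 0 y - d * b 0 y.
  by move=> a b d y; rewrite !mxE.
apply: addmx_sub.
  apply: (sumsmx_sup i) => //; rewrite /B eqxx NkP; apply/forallP => y.
  apply/implyP; rewrite in_setU1 => /orP [/eqP ->|yA].
    by rewrite mulmxBl -scalemxAl E /c divfK // subrr.
  move: wA uA; rewrite !NkP => /forallP /(_ y) /implyP /(_ yA) /eqP w0.
  move=> /forallP /(_ y) /implyP /(_ yA) /eqP u0'.
  by rewrite mulmxBl -scalemxAl E w0 u0' mulr0 subrr.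
apply: scalemx_sub; apply: submx_trans uS _.
apply/sumsmx_subP => j /= ji; apply: (sumsmx_sup j) => //.
by rewrite /B (negPf ji) submx_refl.
Qed.

End Enlarge.


Section Down.
Variables (F : fieldType) (m n : nat).

Let L := genfield F m.+1 n.
Let W1 := Defs.genmx F m.+1 n.
Let f0 := widen_ord (leqnSn m).
Let W' : 'M[L]_(m, n) := rowsub f0 W1.

Let P' : 'M[{mpoly F[m.+1 * n]}]_(m, n) :=
  \matrix_(i < m, j < n) 'X_(mxvec_index (f0 i) j).
Let h (t : 'I_(m * n)) : L := FracField.tofrac (mxvec P' 0 t).
Let cst : {rmorphism F -> L} := (@FracField.tofrac _) \o (@mpolyC (m.+1 * n) F).

Lemma W'E : W' = map_mx (mmap cst h) (Pgen F m n).
Proof.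
apply/matrixP => i j; rewrite !mxE.
by rewrite mmapX mmap1U /h mxvecE mxE.
Qed.


Lemma indep_down l (A : 'I_l -> {set 'I_n}) : indep W1 A -> indep W' A.
Proof.
move=> iW w wN w0 i.
pose E : 'M[L]_(m, m.+1) := rowsub f0 1%:M.
have WE : W' = E *m W1 by rewrite /W' rowsubE.
have eN : forall j, (w j *m E <= Nk W1 (A j))%MS.
  move=> j; have := wN j; rewrite !NkP => /forallP H; apply/forallP => y.
  by rewrite -mulmxA -WE; apply: H.
have e0 : \sum_j w j *m E = 0 by rewrite -mulmx_suml w0 mul0mx.
have h0 := iW _ eN e0 i.
apply/rowP => c; have := congr1 (fun M : 'M[L]_(1, m.+1) => M 0 (f0 c)) h0; rewrite !mxE => <-.
rewrite (bigD1 c) //= !mxE eqxx mulr1 big1 ?addr0 // => k kc.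
rewrite !mxE; case: eqP => [/(congr1 val) /= /val_inj e|_]; last by rewrite mulr0.
by case/eqP: kc.
Qed.

Lemma sat_down l (A : 'I_l -> {set 'I_n}) : sat_prop F m.+1 A -> sat_prop F m A.
Proof.
rewrite /sat_prop => /sat_indep /indep_down /sat_indep sW'.
have : (\rank (Gmx W' A) <= \rank (Gmx (Defs.genmx F m n) A))%N.
  rewrite W'E genmxE' !Gmx_map; exact: spec_rank.
rewrite /saturated in sW' *; rewrite (eqP sW') => le.
rewrite eqn_leq le andbT.
by have := rank_leq_row (Gmx (Defs.genmx F m n) A); rewrite [X in (_ <= X)%N -> _]sum_const_ord.
Qed.

End Down.

Lemma sat_down_iter (F : fieldType) n l (A : 'I_l -> {set 'I_n}) m j :
  sat_prop F (m + j) A -> sat_prop F m A.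
Proof.
elim: j => [|j IH]; first by rewrite addn0.
by rewrite addnS => /sat_down; apply: IH.
Qed.



Lemma sat_rank (K : fieldType) m n l (V : 'M[K]_(m, n)) (A : 'I_l -> {set 'I_n}) :
  saturated V A <-> \rank (\sum_i Nk V (A i))%MS = (\sum_i \rank (Nk V (A i)))%N.
Proof. by rewrite sat_indep indep_rank. Qed.

Lemma sum_const_mx (K : fieldType) m l (X : 'M[K]_m) :
  (0 < l)%N -> (\sum_(i < l) X :=: X)%MS.
Proof.
case: l => // l _; apply/eqmxP/andP; split.
  by apply/sumsmx_subP => i _; apply: submx_refl.
by apply: (sumsmx_sup ord0) => //; apply: submx_refl.
Qed.

Lemma Nk0P (K : fieldType) m n (V : 'M[K]_(m, n)) U :
  (forall w : 'rV[K]_m, (w <= Nk V U)%MS -> w = 0) <-> \rank (colsubset V U) = m.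
Proof.
have hr := rank_leq_row (colsubset V U).
split => [H|r].
  have : Nk V U == 0.
    apply/negPn/negP => nz; have := nz_row_sub (Nk V U); move/H/eqP.
    by rewrite nz_row_eq0 (negPf nz).
  rewrite -mxrank_eq0 rank_Nk => /eqP; lia.
move=> w wN; have : (Nk V U == 0) by rewrite -mxrank_eq0 rank_Nk r subnn.
by move/eqP => e; move: wN; rewrite e submx0 => /eqP.
Qed.

Lemma card_between (T : finType) (S U : {set T}) j :
  S \subset U -> (#|S| <= j <= #|U|)%N -> exists X : {set T}, [/\ S \subset X, X \subset U & #|X| = j].
Proof.
move=> SU /andP [Sj jU]; have [d e] : exists d, j = (#|S| + d)%N by exists (j - #|S|)%N; lia.
rewrite e in jU *; clear e Sj j.
move: jU; elim: d => [|d IH] dU; first by exists S; rewrite addn0.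
have dU' : (#|S| + d <= #|U|)%N by move: dU; lia.
have [X [SX XU cX]] := IH dU'.
have : X \proper U by rewrite properEcard XU cX; lia.
case/properP => _ [x xU xX].
exists (x |: X); split; first by apply: subset_trans SX (subsetUr _ _).
  by rewrite subUset sub1set xU.
by rewrite cardsU1 xX cX addnS add1n.
Qed.

Lemma Nk_cap (K : fieldType) m n (V : 'M[K]_(m, n)) S T :
  (Nk V S :&: Nk V T <= Nk V (S :|: T))%MS.
Proof.
apply/row_subP => k; rewrite NkU; apply/andP; split.
  by apply: submx_trans (row_sub k _) (capmxSl _ _).
by apply: submx_trans (row_sub k _) (capmxSr _ _).
Qed.

Lemma hV_G (K : fieldType) k n (G : 'M[K]_(k, n)) :
  \rank G = k -> forall w : 'rV[K]_k, (w <= Nk G setT)%MS -> w = 0.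
Proof.
move=> rG w; rewrite NkP => /forallP H.
have : row_free G by rewrite /row_free rG.
move/row_freeP' => /(_ w); apply; apply/rowP => j; rewrite [RHS]mxE.
by have /implyP := H j; rewrite in_setT => /(_ isT) /eqP ->.
Qed.

Section Ext.
Variables (K : fieldType) (m n l l' : nat) (V : 'M[K]_(m, n)).
Hypothesis hV : forall w : 'rV[K]_m, (w <= Nk V setT)%MS -> w = 0.
Hypothesis ll : (l' <= l)%N.
Variable A' : 'I_l' -> {set 'I_n}.
Definition Aext (i : 'I_l) : {set 'I_n} :=
  if @insub _ (fun x => x < l')%N _ (val i) is Some j then A' j else setT.

Lemma Aext_w j : Aext (widen_ord ll j) = A' j.
Proof. by rewrite /Aext /= valK. Qed.

Lemma sum_ext (w : 'I_l -> 'rV[K]_m) :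
  (forall i : 'I_l, (l' <= i)%N -> w i = 0) ->
  \sum_i w i = \sum_j w (widen_ord ll j).
Proof.
move=> H; rewrite (bigID (fun i : 'I_l => (i < l')%N)) /= [X in _ + X]big1 ?addr0.
  by rewrite -(big_ord_narrow_cond (P := xpredT)).
by move=> i; rewrite -leqNgt => /H.
Qed.

Lemma indep_ext : indep V A' <-> indep V Aext.
Proof.
split => [H w wN w0 i|H w wN w0 j].
  have wz : forall i0 : 'I_l, (l' <= i0)%N -> w i0 = 0.
    move=> i0 li; apply: hV; have := wN i0; rewrite /Aext; case: insubP => //= j.
    by rewrite ltnNge li.
  case: (ltnP i l') => [il|li]; last by apply: wz.
  have -> : i = widen_ord ll (Ordinal il) by apply: val_inj.
  apply: (H (fun j => w (widen_ord ll j))) => [j|]; first by rewrite -Aext_w.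
  by rewrite -sum_ext.
pose w' (i : 'I_l) := if @insub _ (fun x => x < l')%N _ (val i) is Some j then w j else 0.
have w'w : forall j0, w' (widen_ord ll j0) = w j0 by move=> j0; rewrite /w' /= valK.
have w'z : forall i : 'I_l, (l' <= i)%N -> w' i = 0.
  by move=> i li; rewrite /w'; case: insubP => //= k; rewrite ltnNge li.
rewrite -w'w; apply: (H w') => [i|].
  rewrite /w' /Aext; case: insubP => [k _ _|_]; first exact: wN.
  exact: sub0mx.
by rewrite (sum_ext w'z); under eq_bigr do rewrite w'w.
Qed.

End Ext.

Lemma indep2 (K : fieldType) m n (V : 'M[K]_(m, n)) (A : 'I_2 -> {set 'I_n}) :
  indep V A <-> (forall w : 'rV[K]_m, (w <= Nk V (A ord0 :|: A (lift ord0 ord0)))%MS -> w = 0).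
Proof.
split => [H w|H w wN].
  rewrite NkU => /andP [w0 w1].
  pose f (i : 'I_2) := if i == ord0 then w else - w.
  suff : f ord0 = 0 by rewrite /f eqxx.
  apply: H => [i|].
    rewrite /f; case: (i =P ord0) => [->//|ne]; rewrite eqmx_opp.
    have -> // : i = lift ord0 ord0.
    by case: i ne => [[|[|]]] //= Hi ne; [case: ne; apply: val_inj| apply: val_inj].
  by rewrite big_ord_recl big_ord1 /f /= subrr.
rewrite big_ord_recl big_ord1 => /eqP; rewrite addr_eq0 => /eqP e.
have w0 : w ord0 = 0.
  apply: H; rewrite NkU; apply/andP; split; first exact: wN.
  by rewrite e eqmx_opp; apply: wN.
move=> i; case: i => [[|[|]]] //= Hi.
  by rewrite (_ : Ordinal Hi = ord0) //; apply: val_inj.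
rewrite (_ : Ordinal Hi = lift ord0 ord0); last by apply: val_inj.
by move/eqP: e; rewrite w0 eq_sym oppr_eq0 => /eqP.
Qed.


Lemma hV_W (F : fieldType) m n : (m <= n)%N ->
  forall w : 'rV_m, (w <= Nk (Defs.genmx F m n) setT)%MS -> w = 0.
Proof.
move=> mn; apply/Nk0P; rewrite gen_rank cardsT card_ord; lia.
Qed.

Lemma rank_sum_const (K : fieldType) m l (X : 'M[K]_m) :
  (0 < l)%N -> \rank (\sum_(i < l) X)%MS = \rank X.
Proof. by move=> l0; rewrite (sum_const_mx X l0). Qed.

Lemma partA_ranks (F : fieldType) n k (G : 'M[F]_(k, n)) l (hl : (2 <= l)%N)
  (hG : \rank G = k)
  (rM : forall A : 'I_l -> {set 'I_n}, saturated (Defs.genmx F k n) A -> saturated G A) :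
  forall S : {set 'I_n}, \rank (Nk G S) = \rank (Nk (Defs.genmx F k n) S).
Proof.
have kn : (k <= n)%N by rewrite -hG rank_leq_col.
have l0 : (0 < l)%N by lia.
have big : forall U : {set 'I_n}, (k <= #|U|)%N -> \rank (Nk G U) = 0%N.
  move=> U kU.
  have sW : saturated (Defs.genmx F k n) (fun _ : 'I_l => U).
    apply/sat_rank; rewrite rank_sum_const // rank_Nk gen_rank.
    rewrite big1; [lia | move=> i _; rewrite ?rank_Nk ?gen_rank; lia].
  have := rM _ sW; move/sat_rank; rewrite rank_sum_const // sum_const_ord.
  nia.
move=> S; rewrite !rank_Nk gen_rank.
have le := spec_col G S; rewrite gen_rank in le.
have gk := rank_leq_row (colsubset G S).
case: (leqP k #|S|) => hS.
  have := big S hS; rewrite rank_Nk; lia.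
have [U [SU _ cU]] : exists U : {set 'I_n}, [/\ S \subset U, U \subset setT & #|U| = k].
  by apply: card_between; rewrite ?subsetT // cardsT card_ord; lia.
have hU := big U (eq_leq (esym cU)).
set T := U :\: S.
have cT : #|T| = (k - #|S|)%N.
  by rewrite /T cardsD (setIidPr SU) cU.
have eU : S :|: T = U.
  by apply/setP => x; rewrite !inE; case: (boolP (x \in S)) => //= xS; rewrite (subsetP SU).
have h1 := mxrank_sum_cap (Nk G S) (Nk G T).
have h2 := mxrankS (Nk_cap G S T); rewrite eU hU in h2.
have h3 := rank_leq_row (Nk G S + Nk G T)%MS.
have h4 := rank_leq_col (colsubset G T); rewrite [X in (_ <= X)%N]cT in h4.
rewrite !rank_Nk in h1.
have h5 := rank_leq_row (colsubset G T).
lia.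
Qed.

End Helpers.
Import Helpers.
Unset Implicit Arguments.

Theorem proposition3p5 (F : fieldType) (n k : nat) (G : 'M[F]_(k, n))
  (hG : \rank G = k) (l : nat) (hl : (2 <= l)%N) :
  (rMDS 0 l G <-> MDS l G) /\
  (forall d d' : nat, (d <= n - k)%N -> (d.+1 <= d')%N -> (d' <= n - k)%N ->
     rMDS d l G -> rMDS d' l G) /\
  (forall (d l' : nat), (d <= n - k)%N -> (2 <= l')%N -> (l' < l)%N ->
     rMDS d l G -> rMDS d l' G) /\
  (forall d : nat, (d <= n - k)%N ->
     (rMDS d 2 G <->
      forall S : {set 'I_n}, #|S| = (k + d)%N -> \rank (colsubset G S) = k)).
Proof.
Local Open Scope ring_scope.
have kn : (k <= n)%N by rewrite -hG rank_leq_col.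
have l0 : (0 < l)%N by lia.
split; [split|split; [|split]].
-
  move=> H.
  have rM : forall A : 'I_l -> {set 'I_n}, saturated (Defs.genmx F k n) A -> saturated G A.
    by move=> A; have := H A; rewrite /sat_prop addn0.
  have rkS := partA_ranks hl hG rM.
  move=> A; change (dim_cap G A = dim_cap (Defs.genmx F k n) A).
  have dG := dual G A; have dW := dual (Defs.genmx F k n) A.
  suff : \rank (\sum_i Nk G (A i))%MS = \rank (\sum_i Nk (Defs.genmx F k n) (A i))%MS by lia.
  apply/eqP; rewrite eqn_leq; apply/andP; split.
    have [B [AB [iB rB]]] := enlarge (hV_G hG) A.
    have sB : saturated (Defs.genmx F k n) B.
      have := sat_indep G B; move=> [_ /(_ iB)]; rewrite /saturated => /eqP e.
      have le := spec_Gmx G B; rewrite e in le.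
      rewrite eqn_leq le andbT.
      by have := rank_leq_row (Gmx (Defs.genmx F k n) B); rewrite [X in (_ <= X)%N -> _]sum_const_ord.
    rewrite -rB; have /sat_rank -> := (iffRL (sat_indep G B) iB).
    have /sat_rank eW := sB.
    under eq_bigr do rewrite rkS.
    rewrite -eW; apply: mxrankS; apply: sumsmxS => i _; exact: Nk_anti.
  have [B [AB [iB rB]]] := enlarge (@hV_W F k n kn) A.
  have sB : saturated (Defs.genmx F k n) B by apply/sat_indep.
  have sGB := rM _ sB.
  rewrite -rB; have /sat_rank -> := sB.
  have /sat_rank eG := sGB.
  under eq_bigr do rewrite -rkS.
  rewrite -eG; apply: mxrankS; apply: sumsmxS => i _; exact: Nk_anti.
-
  move=> H A; rewrite /sat_prop addn0 => sW.
  have rkS : forall S : {set 'I_n}, \rank (Nk G S) = \rank (Nk (Defs.genmx F k n) S).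
    move=> S; have := H (fun _ => S).
    have := dual G (fun _ : 'I_l => S); have := dual (Defs.genmx F k n) (fun _ : 'I_l => S).
    rewrite !rank_sum_const //; lia.
  apply/sat_rank; have /sat_rank eW := sW.
  have dG := dual G A; have dW := dual (Defs.genmx F k n) A; have hA := H A.
  under eq_bigr do rewrite rkS.
  lia.
-
  move=> d d' hd hdd' hd' H A sA; apply: H.
  have [j ej] : exists j, d' = (d + j)%N by exists (d' - d)%N; lia.
  by move: sA; rewrite ej addnA; apply: sat_down_iter.
-
  move=> d l' hd hl' hll H A' sA'.
  have ll : (l' <= l)%N by lia.
  have kdn : (k + d <= n)%N by lia.
  have hW := @hV_W F (k + d) n kdn.
  have iA : indep (Defs.genmx F (k + d) n) (Aext (l:=l) A').
    by apply/(indep_ext hW ll); apply/sat_indep.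
  have := H _ (iffRL (sat_indep _ _) iA) => /sat_indep /(indep_ext (hV_G hG) ll).
  by move/sat_indep.
-
  move=> d hd.
  have kdn : (k + d <= n)%N by lia.
  split => [H S cS|H A sA].
    have sS : sat_prop F (k + d) (fun _ : 'I_2 => S).
      apply/sat_indep/indep2/Nk0P; rewrite setUid gen_rank cS; lia.
    have := H _ sS => /sat_indep /indep2 /Nk0P; by rewrite setUid.
  move: sA; rewrite /sat_prop => /sat_indep /indep2 /Nk0P; rewrite gen_rank => eU.
  set U := A ord0 :|: A (lift ord0 ord0) in eU.
  have [S [_ SU cS]] : exists S : {set 'I_n}, [/\ set0 \subset S, S \subset U & #|S| = (k + d)%N].
    by apply: card_between; rewrite ?sub0set // cards0; lia.
  have /Nk0P hS := H S cS.
  apply/sat_indep/indep2 => w wU; apply: hS.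
  by apply: submx_trans wU _; apply: Nk_anti.
Qed.
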